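(* Let $g \ge 2$, $n \ge 2$, let $(t_1,\ldots,t_n)$ be a generic $n$-tuple of elements of $T$, let $l$ and $q$ be distinct elements of $\{1,\ldots,n\}$, and let $(i,j,k)$ be a permutation of $(1,2,3)$. An element $[\rho] \in S_g(t_1,\ldots,t_n)$ lies in the common vanishing locus of $s^l_{i,j}(c_q)$ and $s^l_{i,k}(c_q)$ if and only if it lies in the common vanishing locus of $s^l_{j,i}(c_q)$ and $s^l_{k,i}(c_q)$.
   Context: Let $\Sigma$ be a compact Riemann surface of genus $g$, $p_1,\ldots,p_n\in\Sigma$ distinct points, and fix the presentation $\pi_1(\Sigma\setminus\{p_1,\ldots,p_n\}) = \langle a_1,\ldots,a_g,b_1,\ldots,b_g,c_1,\ldots,c_n \mid \prod_{i=1}^g[a_i,b_i]=\prod_{j=1}^n c_j\rangle$. Let $G=SU(3)$, $T\subset G$ the diagonal maximal torus. An $n$-tuple $(t_1,\ldots,t_n)$ in $T$ is generic if each $t_j$ has centralizer $T$ in $G$ (distinct eigenvalues) and no product $\lambda_1\cdots\lambda_n$ with $\lambda_i$ an eigenvalue of $t_i$ equals $1$. Let $S_g(t_1,\ldots,t_n) := \{\rho\in\mathrm{Hom}(\pi_1(\Sigma\setminus\{p_1,\ldots,p_n\}),G) \mid \rho(c_i)\sim t_i\ \forall i\}/G$ (conjugation quotient; $\sim$ is conjugacy in $G$), and $V^l_g(t_1,\ldots,t_n) := \{\rho \mid \rho(c_l)=t_l,\ \rho(c_i)\sim t_i\ \forall i\}$, a $T$-bundle over $S_g(t_1,\ldots,t_n)$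 under conjugation; every class $[\rho]$ has a representative in $V^l_g(t_1,\ldots,t_n)$. For $1\le j\le 3$ let $\mathbb{C}_{(j)}$ be the representation of $T$ where $\mathrm{diag}(e^{i\theta_1},e^{i\theta_2},e^{i\theta_3})$ acts by $e^{i\theta_j}$, and $L^l_j := (V^l_g(t_1,\ldots,t_n)\times\mathbb{C}_{(j)})/T$. For $l\in\{1,\ldots,n\}$, $1\le j,k\le 3$ and $i'\in\{1,\ldots,n\}\setminus\{l\}$, the paper defines a section $s^l_{j,k}(c_{i'})$ of $L^l_j$ as follows: for a representative $\rho\in V^l_g(t_1,\ldots,t_n)$ choose $A\in SU(3)$ with $A\rho(c_{i'})A^{-1}=t_{i'}$ (unique up to left multiplication by $T$), and the section takes the value determined by the matrix entry $A_{jk}$. Its zero locus is the set of $[\rho]$ such that, for a representative $\rho\in V^l_g(t_1,\ldots,t_n)$ and such $A$, $A_{jk}=0$; equivalently, the $k$-th coordinate of an eigenvector of $\rho(c_{i'})$ with eigenvalue $(t_{i'})_{jj}$ is zero. *)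

(* Defs.v *)
From mathcomp Require Import all_boot all_algebra.
From mathcomp Require Import complex Rstruct.
Set Implicit Arguments. Unset Strict Implicit. Unset Printing Implicit Defensive.
Import GRing.Theory.
Local Open Scope ring_scope.

Definition CC := (Rdefinitions.R)[i].
Definition M3 := 'M[CC]_3.

Definition adjm (A : M3) : M3 := (map_mx (@conjc _) A)^T.

Definition isSU3 (A : M3) : Prop := A *m adjm A = 1%:M /\ \det A = 1.

Definition in_torus (A : M3) : Prop :=
  isSU3 A /\ forall a b : 'I_3, a != b -> A a b = 0.

Definition conjG (x y : M3) : Prop :=
  exists B, isSU3 B /\ B *m x *m invmx B = y.

Definition centralizer_is_T (t : M3) : Prop :=
  forall B, isSU3 B -> (B *m t = t *m B <-> in_torus B).

Definition generic n (t : 'I_n -> M3) : Prop :=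
  (forall i, centralizer_is_T (t i)) /\
  (forall lam : 'I_n -> CC, (forall i, eigenvalue (t i) (lam i)) ->
      \prod_(i < n) lam i != 1).

(* an element of Hom(pi_1(Sigma \ {p_1..p_n}), G) is determined by the images
   of the generators a_1..a_g, b_1..b_g, c_1..c_n *)
Record rep (g n : nat) := Rep {
  ra : 'I_g -> M3; rb : 'I_g -> M3; rc : 'I_n -> M3 }.

Definition is_hom g n (r : rep g n) : Prop :=
  (forall i, isSU3 (ra r i)) /\ (forall i, isSU3 (rb r i)) /\
  (forall j, isSU3 (rc r j)) /\
  \prod_(i < g) (ra r i * rb r i * invmx (ra r i) * invmx (rb r i))
    = \prod_(j < n) rc r j.

Definition conj_rep g n (B : M3) (r : rep g n) : rep g n :=
  Rep (fun i => B *m ra r i *m invmx B) (fun i => B *m rb r i *m invmx B)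
      (fun j => B *m rc r j *m invmx B).

(* rho is a representative of a point of S_g(t_1..t_n) *)
Definition in_S g n (t : 'I_n -> M3) (r : rep g n) : Prop :=
  is_hom r /\ forall i, conjG (rc r i) (t i).

Definition in_V g n (t : 'I_n -> M3) (l : 'I_n) (r : rep g n) : Prop :=
  in_S t r /\ rc r l = t l.

(* [rho] lies in the zero locus of the section s^l_{j,k}(c_q): for a
   representative rho' in V^l of the class of rho and A in SU(3) with
   A rho'(c_q) A^{-1} = t_q, the entry A_{jk} vanishes. *)
Definition in_zero_locus g n (t : 'I_n -> M3) (l q : 'I_n) (j k : 'I_3)
    (r : rep g n) : Prop :=
  exists B, isSU3 B /\ in_V t l (conj_rep B r) /\
    exists A, isSU3 A /\ A *m rc (conj_rep B r) q *m invmx A = t q /\ A j k = 0.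

(* Main.v *)
Require Import Defs.
From mathcomp Require Import all_boot all_algebra.
From mathcomp Require Import complex Rstruct ring.
Import GRing.Theory Num.Theory.
Local Open Scope ring_scope.

Lemma adjmM (A B : M3) : adjm (A *m B) = adjm B *m adjm A.
Proof. by rewrite /adjm map_mxM trmx_mul. Qed.

Lemma adjmK (A : M3) : adjm (adjm A) = A.
Proof. by apply/matrixP => a b; rewrite !mxE conjcK. Qed.

Lemma su3_unit {A} : isSU3 A -> A \in unitmx.
Proof. by case=> _ hd; rewrite unitmxE hd unitr1. Qed.

Lemma su3_inv {A} : isSU3 A -> invmx A = adjm A.
Proof.
move=> hA; have hu := su3_unit hA; case: hA => h _.
by rewrite -[adjm A]mul1mx -(mulVmx hu) -mulmxA h mulmx1.
Qed.

Lemma su3_adjl {A} : isSU3 A -> adjm A *m A = 1%:M.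
Proof. by case=> h _; apply: mulmx1C. Qed.

Lemma su3_mul {A} B : isSU3 A -> isSU3 B -> isSU3 (A *m B).
Proof.
move=> [hA dA] [hB dB]; split; last by rewrite det_mulmx dA dB mulr1.
by rewrite adjmM mulmxA -(mulmxA A) hB mulmx1 hA.
Qed.

Lemma su3_invmx {A} : isSU3 A -> isSU3 (invmx A).
Proof.
move=> hA; split; last by rewrite det_inv; case: hA => _ ->; rewrite invr1.
by rewrite su3_inv // adjmK su3_adjl.
Qed.

Lemma sum3 (f : 'I_3 -> CC) (i j k : 'I_3) : i != j -> j != k -> i != k ->
  \sum_(c < 3) f c = f i + f j + f k.
Proof.
pose g n := f (inord n).
have F : forall c : 'I_3, f c = g (val c) by move=> c; rewrite /g inord_val.
rewrite (eq_bigr (fun c => g (val c))) ?F //.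
rewrite !big_ord_recr big_ord0 /= add0r.
case: i => [[|[|[|?]]] hi] //; case: j => [[|[|[|?]]] hj] //;
case: k => [[|[|[|?]]] hk] // _ _ _ /=; ring.
Qed.

Lemma rowsum {A : M3} i : isSU3 A -> \sum_c `|A i c| ^+ 2 = 1.
Proof.
case=> h _; have := congr1 (fun M : M3 => M i i) h.
rewrite !mxE eqxx /= => H; apply: etrans H; apply: eq_bigr => c _.
by rewrite !mxE sqr_normc.
Qed.

Lemma colsum {A : M3} i : isSU3 A -> \sum_c `|A c i| ^+ 2 = 1.
Proof.
move=> hA; have := congr1 (fun M : M3 => M i i) (su3_adjl hA).
rewrite !mxE eqxx /= => H; apply: etrans H; apply: eq_bigr => c _.
by rewrite !mxE sqr_normc mulrC.
Qed.

Lemma sq0 (x y : CC) : `|x| ^+ 2 + `|y| ^+ 2 = 0 -> x = 0 /\ y = 0.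
Proof.
move/eqP; rewrite paddr_eq0 ?exprn_ge0 ?normr_ge0 //.
case/andP=> /eqP hx /eqP hy.
move: (@sqrf_eq0 _ `|x|) (@sqrf_eq0 _ `|y|); rewrite hx hy eqxx !normr_eq0.
by move=> /esym/eqP -> /esym/eqP ->.
Qed.

Lemma su3_rowcol {A : M3} (i j k : 'I_3) : i != j -> j != k -> i != k ->
  isSU3 A -> (A i j = 0 /\ A i k = 0) <-> (A j i = 0 /\ A k i = 0).
Proof.
move=> hij hjk hik hA.
have R := rowsum i hA; have C := colsum i hA.
rewrite (sum3 _ _ _ _ hij hjk hik) in R; rewrite (sum3 _ _ _ _ hij hjk hik) in C.
split=> [[h1 h2]|[h1 h2]].
- apply: sq0; move: R C; rewrite h1 h2 normr0 expr0n /= !addr0 => -> H.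
  by apply: (addrI 1); rewrite addr0 addrA.
- apply: sq0; move: R C; rewrite h1 h2 normr0 expr0n /= !addr0 => H R.
  by apply: (addrI 1); rewrite addr0 addrA -R H R.
Qed.

Lemma diag_mull (P M : M3) a b : in_torus P -> (P *m M) a b = P a a * M a b.
Proof.
case=> _ hP; rewrite mxE (bigD1 a) //= big1 ?addr0 // => c hc.
by rewrite hP ?mul0r // eq_sym.
Qed.

Lemma diag_mulr (P M : M3) a b : in_torus P -> (M *m P) a b = M a b * P b b.
Proof.
case=> _ hP; rewrite mxE (bigD1 b) //= big1 ?addr0 // => c hc.
by rewrite hP ?mulr0.
Qed.

Lemma comm_inv (X T : M3) : X \in unitmx -> X *m T = T *m X ->
  invmx X *m T = T *m invmx X.
Proof.
move=> uX cX.
by rewrite -{1}(mulmxK uX T) -cX -!mulmxA mulKmx.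
Qed.

Lemma transfer n (t : 'I_n -> M3) l q g (r : rep g n) B1 A1 a b :
  (forall i, centralizer_is_T (t i)) -> isSU3 B1 ->
  B1 *m rc r l *m invmx B1 = t l -> isSU3 A1 ->
  A1 *m (B1 *m rc r q *m invmx B1) *m invmx A1 = t q ->
  in_zero_locus t l q a b r -> A1 a b = 0.
Proof.
move=> hc hB1 hl1 hA1 hq1 [B2 [hB2 [[_ hl2] [A2 [hA2 [hq2 h0]]]]]].
simpl in hl2, hq2.
have uB1 := su3_unit hB1; have uB2 := su3_unit hB2.
have uA1 := su3_unit hA1; have uA2 := su3_unit hA2.
pose D := B2 *m invmx B1.
have hD : isSU3 D by apply: su3_mul => //; apply: su3_invmx.
have cD : D *m t l = t l *m D.
  by rewrite /D -{1}hl1 -{1}hl2 !mulmxA !mulmxKV.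
have tD := proj1 (hc l D hD) cD.
pose E := A2 *m B2 *m invmx B1 *m invmx A1.
have hE : isSU3 E.
  by apply: su3_mul; [apply: su3_mul; [apply: su3_mul|apply: su3_invmx]|apply: su3_invmx].
have uE := su3_unit hE.
have cE : E *m t q = t q *m E.
  by rewrite /E -{1}hq1 -{1}hq2 !mulmxA !mulmxKV.
have cE' : invmx E *m t q = t q *m invmx E.
  exact: comm_inv.
have tE := proj1 (hc q _ (su3_invmx hE)) cE'.
have eA : A1 = invmx E *m (A2 *m D).
  rewrite -[LHS](mulKmx uE); congr (_ *m _).
  by rewrite /E /D mulmxKV // mulmxA.
by rewrite eA diag_mull // diag_mulr // h0 mul0r mulr0.
Qed.

Theorem lemma2p5 (g n : nat) (t : 'I_n -> M3) :
  (2 <= g)%N -> (2 <= n)%N ->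
  (forall i, in_torus (t i)) -> generic t ->
  forall (l q : 'I_n), l != q ->
  forall (i j k : 'I_3), i != j -> j != k -> i != k ->
  forall r : rep g n, in_S t r ->
    (in_zero_locus t l q i j r /\ in_zero_locus t l q i k r) <->
    (in_zero_locus t l q j i r /\ in_zero_locus t l q k i r).
Proof.
move=> _ _ _ [hc _] l q _ i j k hij hjk hik r _.
split.
- move=> [[B1 [hB1 [hV1 [A1 [hA1 [hq1 h1]]]]]] Z2].
  have hl1 := hV1.2; simpl in hl1, hq1.
  have h2 := @transfer _ _ _ _ _ _ _ _ _ _ hc hB1 hl1 hA1 hq1 Z2.
  have [h3 h4] := (su3_rowcol _ _ _ hij hjk hik hA1).1 (conj h1 h2).
  by split; exists B1; split=> //; split=> //; exists A1.
- move=> [[B1 [hB1 [hV1 [A1 [hA1 [hq1 h1]]]]]] Z2].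
  have hl1 := hV1.2; simpl in hl1, hq1.
  have h2 := @transfer _ _ _ _ _ _ _ _ _ _ hc hB1 hl1 hA1 hq1 Z2.
  have [h3 h4] := (su3_rowcol _ _ _ hij hjk hik hA1).2 (conj h1 h2).
  by split; exists B1; split=> //; split=> //; exists A1.
Qed.
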